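(* Let $P=P(x,y)$ be a quasi-polynomial in two noncommuting variables $x,y$ whose coefficients are polynomials in the entries $x_{ij},y_{ij}$ ($1\le i,j\le 2$). If $P$ is a quasi-identity of $M_2$, then $P$ is a consequence of the Cayley–Hamilton identity, i.e. $P$ lies in the T-ideal generated by $Q_2$.
   Context: $F$ is a field of characteristic $0$, $M_2=M_2(F)$. Quasi-polynomials in $x,y$ are elements of the free algebra on $x,y$ over $F[x_{ij},y_{ij}]$; $P$ is a quasi-identity of $M_2$ if $P(A,B)=0$ for all $A=(a_{ij}),B=(b_{ij})\in M_2$, substituting $A,B$ for $x,y$ and $a_{ij},b_{ij}$ for $x_{ij},y_{ij}$. Let $\xi,\eta$ be the generic matrices $(x_{ij}),(y_{ij})$, and for monomials $\mathrm{tr}(\cdot)$ denote the trace of the corresponding product of generic matrices. $Q_2(x_1,x_2)=x_1x_2+x_2x_1-\mathrm{tr}(x_1)x_2-\mathrm{tr}(x_2)x_1+\mathrm{tr}(x_1)\mathrm{tr}(x_2)-\mathrm{tr}(x_1x_2)$. A T-ideal is an ideal (of the quasi-polynomial algebra in arbitrarily many variables) closed under simultaneous substitutions of variables $x_k\mapsto H_k$ and of their entry-variables $x^{(k)}_{ij}\mapsto$ the $(i,j)$-entry of the matrix obtained from $H_k$ by replacing variables with generic matrices. *)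

(* Defs.v *)
From HB Require Import structures.
From mathcomp Require Import all_boot all_order all_algebra.
Set Implicit Arguments. Unset Strict Implicit. Unset Printing Implicit Defensive.
Import Order.TTheory GRing.Theory Num.Theory.
Local Open Scope ring_scope.

(* Syntax of quasi-polynomials in countably many noncommuting variables x_k
   (k : nat), with coefficients polynomials (over F) in the commuting
   central variables x^{(k)}_{ij}, 0 <= i,j < 2. *)
Inductive qterm (F : Type) : Type :=
| QVar : nat -> qterm F
| QEnt : nat -> 'I_2 -> 'I_2 -> qterm F
| QConst : F -> qterm F
| QAdd : qterm F -> qterm F -> qterm F
| QMul : qterm F -> qterm F -> qterm F.

Arguments QVar {F}.
Arguments QEnt {F}.

Section QP.
Variable F : fieldType.

Definition QSub (p q : qterm F) := QAdd p (QMul (QConst (-1)) q).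

(* Equality in the quasi-polynomial algebra F[x^{(k)}_{ij}]<x_k>: the
   congruence generated by the axioms of an associative unital F-algebra in
   which the x^{(k)}_{ij} (and the scalars) are central. *)
Inductive qeq : qterm F -> qterm F -> Prop :=
| qeq_refl p : qeq p p
| qeq_sym p q : qeq p q -> qeq q p
| qeq_trans p q r : qeq p q -> qeq q r -> qeq p r
| qeq_add p p' q q' : qeq p p' -> qeq q q' -> qeq (QAdd p q) (QAdd p' q')
| qeq_mul p p' q q' : qeq p p' -> qeq q q' -> qeq (QMul p q) (QMul p' q')
| qeq_addA p q r : qeq (QAdd p (QAdd q r)) (QAdd (QAdd p q) r)
| qeq_addC p q : qeq (QAdd p q) (QAdd q p)
| qeq_add0 p : qeq (QAdd (QConst 0) p) p
| qeq_mulA p q r : qeq (QMul p (QMul q r)) (QMul (QMul p q) r)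
| qeq_mul1l p : qeq (QMul (QConst 1) p) p
| qeq_mul1r p : qeq (QMul p (QConst 1)) p
| qeq_mul0 p : qeq (QMul (QConst 0) p) (QConst 0)
| qeq_mulDl p q r : qeq (QMul (QAdd p q) r) (QAdd (QMul p r) (QMul q r))
| qeq_mulDr p q r : qeq (QMul r (QAdd p q)) (QAdd (QMul r p) (QMul r q))
| qeq_constD a b : qeq (QConst (a + b)) (QAdd (QConst a) (QConst b))
| qeq_constM a b : qeq (QConst (a * b)) (QMul (QConst a) (QConst b))
| qeq_constC a p : qeq (QMul (QConst a) p) (QMul p (QConst a))
| qeq_entC k i j p : qeq (QMul (QEnt k i j) p) (QMul p (QEnt k i j)).

(* Replacing every variable x_l by the generic matrix (x^{(l)}_{ij}):
   a 2x2 matrix whose entries are (central) quasi-polynomials. *)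
Definition gmat := 'I_2 -> 'I_2 -> qterm F.

Fixpoint gen (t : qterm F) : gmat :=
  match t with
  | QVar l => fun i j => QEnt l i j
  | QEnt l a b => fun i j => if i == j then QEnt l a b else QConst 0
  | QConst c => fun i j => if i == j then QConst c else QConst 0
  | QAdd p q => fun i j => QAdd (gen p i j) (gen q i j)
  | QMul p q => fun i j =>
      QAdd (QMul (gen p i ord0) (gen q ord0 j))
           (QMul (gen p i (@Ordinal 2 1 isT)) (gen q (@Ordinal 2 1 isT) j))
  end.

Definition qtr (t : qterm F) : qterm F :=
  QAdd (gen t ord0 ord0) (gen t (@Ordinal 2 1 isT) (@Ordinal 2 1 isT)).

Fixpoint qsubst (H : nat -> qterm F) (t : qterm F) : qterm F :=
  match t with
  | QVar k => H k
  | QEnt k i j => gen (H k) i j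
  | QConst c => QConst c
  | QAdd p q => QAdd (qsubst H p) (qsubst H q)
  | QMul p q => QMul (qsubst H p) (qsubst H q)
  end.

(* Q_2(x_1, x_2) with x_1 = QVar 0, x_2 = QVar 1. *)
Definition Q2 : qterm F :=
  let x1 := QVar 0 in let x2 := QVar 1 in
  QSub (QAdd (QSub (QSub (QAdd (QMul x1 x2) (QMul x2 x1))
                         (QMul (qtr x1) x2))
                   (QMul (qtr x2) x1))
             (QMul (qtr x1) (qtr x2)))
       (qtr (QMul x1 x2)).

Inductive inTideal_Q2 : qterm F -> Prop :=
| TI_gen : inTideal_Q2 Q2
| TI_add p q : inTideal_Q2 p -> inTideal_Q2 q -> inTideal_Q2 (QAdd p q)
| TI_mull a p : inTideal_Q2 p -> inTideal_Q2 (QMul a p)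
| TI_mulr a p : inTideal_Q2 p -> inTideal_Q2 (QMul p a)
| TI_eq p q : qeq p q -> inTideal_Q2 p -> inTideal_Q2 q
| TI_subst H p : inTideal_Q2 p -> inTideal_Q2 (qsubst H p).

Fixpoint qeval (rho : nat -> 'M[F]_2) (t : qterm F) : 'M[F]_2 :=
  match t with
  | QVar k => rho k
  | QEnt k i j => (rho k i j)%:M
  | QConst c => c%:M
  | QAdd p q => qeval rho p + qeval rho q
  | QMul p q => qeval rho p *m qeval rho q
  end.

Fixpoint two_var (t : qterm F) : bool :=
  match t with
  | QVar k => k < 2
  | QEnt k _ _ => k < 2
  | QConst _ => true
  | QAdd p q => two_var p && two_var q
  | QMul p q => two_var p && two_var q
  end%N.

Definition env2 (A B : 'M[F]_2) : nat -> 'M[F]_2 :=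
  fun k => if k == 0%N then A else if k == 1%N then B else 0.

Definition quasi_identity2 (P : qterm F) : Prop :=
  forall A B : 'M[F]_2, qeval (env2 A B) P = 0.

End QP.

(* Main.v *)
Require Import Defs.
From HB Require Import structures.
From mathcomp Require Import all_boot all_order all_algebra.
From mathcomp Require Import boolp ring.
From Stdlib Require Import Setoid Morphisms ProofIrrelevance.
Set Implicit Arguments. Unset Strict Implicit. Unset Printing Implicit Defensive.
Import GRing.Theory.
Local Open Scope ring_scope.

Section Quot.
Variable F : fieldType.
Local Notation qt := (qterm F).

Lemma qeq_equiv : Equivalence (@qeq F).
Proof. split; [exact: qeq_refl|exact: qeq_sym|exact: qeq_trans]. Qed.
Existing Instance qeq_equiv.
Instance qadd_proper : Proper (@qeq F ==> @qeq F ==> @qeq F) (@QAdd F).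
Proof. by move=> ? ? ? ? ? ?; apply: qeq_add. Qed.
Instance qmul_proper : Proper (@qeq F ==> @qeq F ==> @qeq F) (@QMul F).
Proof. by move=> ? ? ? ? ? ?; apply: qeq_mul. Qed.

Lemma qeq_neg_self (t : qt) : qeq (QAdd t (QMul (QConst (-1)) t)) (QConst 0).
Proof.
rewrite -{1}(qeq_mul1l t) -qeq_mulDl -qeq_constD subrr; exact: qeq_mul0.
Qed.

Definition Rel (t s : qt) := inTideal_Q2 (QSub t s).

Lemma I0 : inTideal_Q2 (QConst (0 : F)).
Proof. apply: (TI_eq (qeq_mul0 (Q2 F))); apply: TI_mull; exact: TI_gen. Qed.

Lemma Iqeq (p q : qt) : qeq p q -> inTideal_Q2 p -> inTideal_Q2 q.
Proof. exact: TI_eq. Qed.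

Lemma qeq_I (p : qt) : qeq p (QConst 0) -> inTideal_Q2 p.
Proof. by move=> h; apply: (Iqeq (qeq_sym h)); exact: I0. Qed.

Lemma qeq_negneg (t : qt) : qeq (QMul (QConst (-1)) (QMul (QConst (-1)) t)) t.
Proof. by rewrite qeq_mulA -qeq_constM mulrNN mulr1 qeq_mul1l; reflexivity. Qed.

Lemma qeq_negD (t s : qt) : qeq (QMul (QConst (-1)) (QAdd t s))
  (QAdd (QMul (QConst (-1)) t) (QMul (QConst (-1)) s)).
Proof. exact: qeq_mulDr. Qed.

Lemma qeq_add0r (t : qt) : qeq (QAdd t (QConst 0)) t.
Proof. rewrite qeq_addC qeq_add0; reflexivity. Qed.

Lemma Rel_refl (t : qt) : Rel t t.
Proof. exact/qeq_I/qeq_neg_self. Qed.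

Lemma Rel_sym (t s : qt) : Rel t s -> Rel s t.
Proof.
move=> h; apply: (Iqeq _ (TI_mull (QConst (-1)) h)).
rewrite /QSub qeq_negD qeq_negneg qeq_addC; reflexivity.
Qed.

Lemma Rel_trans (t s u : qt) : Rel t s -> Rel s u -> Rel t u.
Proof.
move=> h1 h2; apply: (Iqeq _ (TI_add h1 h2)).
rewrite /QSub -qeq_addA (qeq_addA (QMul _ s)) (qeq_addC (QMul _ s)).
rewrite qeq_neg_self qeq_add0; reflexivity.
Qed.

Lemma qeq_Rel (t s : qt) : qeq t s -> Rel t s.
Proof. move=> h; rewrite /Rel /QSub; apply/qeq_I; rewrite h; exact: qeq_neg_self. Qed.

Lemma Rel_add (t t' s s' : qt) : Rel t t' -> Rel s s' -> Rel (QAdd t s) (QAdd t' s').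
Proof.
move=> h1 h2; apply: (Iqeq _ (TI_add h1 h2)).
rewrite /QSub qeq_negD -!qeq_addA; apply: qeq_add; first reflexivity.
rewrite !qeq_addA (qeq_addC _ s); reflexivity.
Qed.

Lemma qeq_cmul (c : F) (a b : qt) :
  qeq (QMul a (QMul (QConst c) b)) (QMul (QConst c) (QMul a b)).
Proof.
rewrite qeq_mulA -(qeq_constC c a) -qeq_mulA; reflexivity.
Qed.

Lemma Rel_mul (t t' s s' : qt) : Rel t t' -> Rel s s' -> Rel (QMul t s) (QMul t' s').
Proof.
move=> h1 h2; apply: (Iqeq _ (TI_add (TI_mulr s h1) (TI_mull t' h2))).
rewrite /QSub qeq_mulDl qeq_mulDr -qeq_mulA qeq_cmul.
rewrite -qeq_addA (qeq_addA (QMul _ (QMul t' s))) (qeq_addC (QMul _ (QMul t' s))).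
rewrite qeq_neg_self qeq_add0; reflexivity.
Qed.

Lemma big_ord2 (R : zmodType) (f : 'I_2 -> R) :
  \sum_(k < 2) f k = f ord0 + f (@Ordinal 2 1 isT).
Proof. by rewrite big_ord_recl big_ord1; congr (_ + f _); apply: val_inj. Qed.

Lemma ord2P (i : 'I_2) : i = ord0 \/ i = @Ordinal 2 1 isT.
Proof. by case: i => [[|[|//]] h]; [left|right]; apply: val_inj. Qed.

Lemma qeval_gen (rho : nat -> 'M[F]_2) (t : qt) i j :
  qeval rho (gen t i j) = (qeval rho t i j)%:M.
Proof.
elim: t i j => [l|l a b|c|p IHp q IHq|p IHp q IHq] i j /=.
- by [].
- by rewrite mxE; case: eqP => _ //=; rewrite ?mulr1n ?mulr0n.
- by rewrite mxE; case: eqP => _ //=; rewrite ?mulr1n ?mulr0n.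
- by rewrite IHp IHq mxE raddfD.
- rewrite !IHp !IHq mxE big_ord2 -!scalar_mxM raddfD /=.
  by do 3!f_equal; apply: val_inj.
Qed.

Lemma qeval_qeq (rho : nat -> 'M[F]_2) (p q : qt) : qeq p q -> qeval rho p = qeval rho q.
Proof.
elim => //= {p q}.
- by move=> p q r _ -> _ ->.
- by move=> p p' q q' _ -> _ ->.
- by move=> p p' q q' _ -> _ ->.
- by move=> p q r; rewrite addrA.
- by move=> p q; rewrite addrC.
- by move=> p; rewrite raddf0 add0r.
- by move=> p q r; rewrite mulmxA.
- by move=> p; rewrite mul1mx.
- by move=> p; rewrite mulmx1.
- by move=> p; rewrite raddf0 mul0mx.
- by move=> p q r; rewrite mulmxDl.
- by move=> p q r; rewrite mulmxDr.
- by move=> a b; rewrite raddfD.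
- by move=> a b; rewrite scalar_mxM.
- by move=> a p; rewrite scalar_mxC.
- by move=> k i j p; rewrite scalar_mxC.
Qed.

Lemma qeval_subst (rho : nat -> 'M[F]_2) H (p : qt) :
  qeval rho (qsubst H p) = qeval (fun k => qeval rho (H k)) p.
Proof.
elim: p => [k|k i j|c|p IHp q IHq|p IHp q IHq] //=; rewrite ?IHp ?IHq //.
by rewrite qeval_gen.
Qed.

Lemma qeval_Q2 (rho : nat -> 'M[F]_2) : qeval rho (Q2 F) = 0.
Proof.
apply/matrixP => i j; rewrite /=.
rewrite !(mxE, big_ord2).
by case: (ord2P i) => ->; case: (ord2P j) => ->; rewrite /= ?mulr1n ?mulr0n; ring.
Qed.

Lemma qeval_I (p : qt) : inTideal_Q2 p -> forall rho, qeval rho p = 0.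
Proof.
elim => {p} /=.
- exact: qeval_Q2.
- by move=> p q _ h1 _ h2 rho; rewrite h1 h2 addr0.
- by move=> a p _ h rho; rewrite h mulmx0.
- by move=> a p _ h rho; rewrite h mul0mx.
- by move=> p q /qeval_qeq e _ h rho; rewrite -e h.
- by move=> H p _ h rho; rewrite qeval_subst h.
Qed.


Record Q := QC { qset : qt -> Prop; qsetP : exists t, qset = Rel t }.
HB.instance Definition _ := gen_eqMixin Q.
HB.instance Definition _ := gen_choiceMixin Q.

Definition cls (t : qt) : Q := @QC (Rel t) (ex_intro _ t erefl).

Lemma Q_eq (a b : Q) : qset a = qset b -> a = b.
Proof.
case: a => sa pa; case: b => sb pb /= e; subst sb.
by rewrite (Prop_irrelevance pa pb).
Qed.

Lemma cls_eq (t s : qt) : cls t = cls s <-> Rel t s.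
Proof.
split=> [e|h].
  have : qset (cls t) t by exact: Rel_refl.
  by rewrite e /=; apply: Rel_sym.
apply: Q_eq => /=; apply: funext => u; apply: propext; split => h'.
  exact: Rel_trans (Rel_sym h) h'.
exact: Rel_trans h h'.
Qed.

Lemma clsP (a : Q) : exists t, a = cls t.
Proof. case: a => sa [t e]; exists t; exact: Q_eq. Qed.

Definition rep (a : Q) : qt :=
  proj1_sig (cid (clsP a)).
Lemma repK (a : Q) : cls (rep a) = a.
Proof. rewrite /rep; case: cid => t /= e; by rewrite e. Qed.
Lemma Rel_rep (t : qt) : Rel (rep (cls t)) t.
Proof. by apply/cls_eq; rewrite repK. Qed.

Definition qzero := cls (QConst 0).
Definition qone := cls (QConst 1).
Definition qadd (a b : Q) := cls (QAdd (rep a) (rep b)).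
Definition qmul (a b : Q) := cls (QMul (rep a) (rep b)).
Definition qopp (a : Q) := cls (QMul (QConst (-1)) (rep a)).

Lemma qaddE t s : qadd (cls t) (cls s) = cls (QAdd t s).
Proof. by apply/cls_eq; apply: Rel_add; apply: Rel_rep. Qed.
Lemma qmulE t s : qmul (cls t) (cls s) = cls (QMul t s).
Proof. by apply/cls_eq; apply: Rel_mul; apply: Rel_rep. Qed.
Lemma qoppE t : qopp (cls t) = cls (QMul (QConst (-1)) t).
Proof. by apply/cls_eq; apply: Rel_mul; [apply: Rel_refl|apply: Rel_rep]. Qed.

Lemma qone_neq0 : qone != qzero.
Proof.
apply/eqP => /cls_eq h; have := qeval_I h (fun _ => 0).
move=> /matrixP /(_ ord0 ord0).
rewrite !mxE big_ord2 !mxE /= mulr1n mulr0n !mulr0 !addr0 => /eqP; by rewrite oner_eq0.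
Qed.

Ltac qelim := repeat (let a := fresh "a" in move=> a; case: (clsP a) => ? ->).

Lemma qaddA : associative qadd.
Proof. qelim; rewrite !qaddE; apply/cls_eq/qeq_Rel/qeq_addA. Qed.
Lemma qaddC : commutative qadd.
Proof. qelim; rewrite !qaddE; apply/cls_eq/qeq_Rel/qeq_addC. Qed.
Lemma qadd0 : left_id qzero qadd.
Proof. qelim; rewrite !qaddE; apply/cls_eq/qeq_Rel/qeq_add0. Qed.
Lemma qaddN : left_inverse qzero qopp qadd.
Proof.
qelim; rewrite qoppE !qaddE; apply/cls_eq/qeq_Rel.
rewrite qeq_addC; exact: qeq_neg_self.
Qed.
Lemma qmulA : associative qmul.
Proof. qelim; rewrite !qmulE; apply/cls_eq/qeq_Rel/qeq_mulA. Qed.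
Lemma qmul1 : left_id qone qmul.
Proof. qelim; rewrite !qmulE; apply/cls_eq/qeq_Rel/qeq_mul1l. Qed.
Lemma qmulr1 : right_id qone qmul.
Proof. qelim; rewrite !qmulE; apply/cls_eq/qeq_Rel/qeq_mul1r. Qed.
Lemma qmulDl : left_distributive qmul qadd.
Proof. qelim; rewrite !(qmulE, qaddE); apply/cls_eq/qeq_Rel/qeq_mulDl. Qed.
Lemma qmulDr : right_distributive qmul qadd.
Proof. qelim; rewrite !(qmulE, qaddE); apply/cls_eq/qeq_Rel/qeq_mulDr. Qed.

HB.instance Definition _ := GRing.isNzRing.Build Q qaddA qaddC qadd0 qaddN
  qmulA qmul1 qmulr1 qmulDl qmulDr qone_neq0.

Lemma clsD t s : cls (QAdd t s) = cls t + cls s.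
Proof. by rewrite -qaddE. Qed.
Lemma clsM t s : cls (QMul t s) = cls t * cls s.
Proof. by rewrite -qmulE. Qed.
Lemma cls0 : cls (QConst 0) = 0.
Proof. by []. Qed.
Lemma cls1 : cls (QConst 1) = 1.
Proof. by []. Qed.
Lemma clsN1 t : cls (QMul (QConst (-1)) t) = - cls t.
Proof. by rewrite -qoppE. Qed.
Lemma clsB t s : cls (QSub t s) = cls t - cls s.
Proof. by rewrite /QSub clsD clsN1. Qed.


Lemma I_cls0 (p : qt) : inTideal_Q2 p -> cls p = 0.
Proof.
move=> h; apply/cls_eq; apply: (Iqeq _ h); rewrite /QSub.
rewrite -qeq_constM mulr0 qeq_add0r; reflexivity.
Qed.

Lemma cls0_I (p : qt) : cls p = 0 -> inTideal_Q2 p.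
Proof.
move=> /cls_eq h; apply: (Iqeq _ h); rewrite /QSub.
rewrite -qeq_constM mulr0 qeq_add0r; reflexivity.
Qed.

Lemma clsC_comm (c : F) (z : Q) : cls (QConst c) * z = z * cls (QConst c).
Proof.
case: (clsP z) => s ->; rewrite -!clsM; apply/cls_eq/qeq_Rel/qeq_constC.
Qed.

Fixpoint cent (t : qt) : bool :=
  match t with
  | QVar _ => false
  | QEnt _ _ _ => true
  | QConst _ => true
  | QAdd p q => cent p && cent q
  | QMul p q => cent p && cent q
  end.

Lemma cent_comm (c : qt) : cent c -> forall z : Q, cls c * z = z * cls c.
Proof.
elim: c => [//|k i j|a|p IHp q IHq|p IHp q IHq] /= hc z.
- case: (clsP z) => s ->; rewrite -!clsM; apply/cls_eq/qeq_Rel/qeq_entC.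
- exact: clsC_comm.
- case/andP: hc => hp hq; by rewrite clsD mulrDl mulrDr IHp // IHq.
- case/andP: hc => hp hq; by rewrite clsM -mulrA IHq // mulrA IHp // mulrA.
Qed.

Lemma gen_ok (t : qt) i j : cent (gen t i j) && (two_var t ==> two_var (gen t i j)).
Proof.
elim: t i j => [l|l a b|c|p IHp q IHq|p IHp q IHq] i j //=.
- by rewrite /= implybb.
- by case: (i == j); rewrite /= ?implybb ?implybT.
- by case: (i == j); rewrite /= ?implybb ?implybT.
- move: (IHp i j) (IHq i j) => /andP[-> h1] /andP[-> h2] /=.
  by apply/implyP => /andP[/(implyP h1) -> /(implyP h2) ->].
- move: (IHp i ord0) (IHq ord0 j) (IHp i (@Ordinal 2 1 isT)) (IHq (@Ordinal 2 1 isT) j).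
  move=> /andP[-> h1] /andP[-> h2] /andP[-> h3] /andP[-> h4] /=.
  by apply/implyP => /andP[hp hq]; rewrite (implyP h1 hp) (implyP h2 hq) (implyP h3 hp) (implyP h4 hq).
Qed.

Definition Cen (z : Q) := exists c, [/\ cent c, two_var c & z = cls c].

Lemma Cen_comm z w : Cen z -> z * w = w * z.
Proof. by case=> c [hc _ ->]; apply: cent_comm. Qed.
Lemma CenA z w u : Cen z -> w * (z * u) = z * (w * u).
Proof. by move=> h; rewrite mulrA -(@Cen_comm z w h) mulrA. Qed.
Lemma CenD z w : Cen z -> Cen w -> Cen (z + w).
Proof. by case=> c [h1 h2 ->] [d [h3 h4 ->]]; exists (QAdd c d); rewrite /= h1 h2 h3 h4 clsD. Qed.
Lemma CenM z w : Cen z -> Cen w -> Cen (z * w).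
Proof. by case=> c [h1 h2 ->] [d [h3 h4 ->]]; exists (QMul c d); rewrite /= h1 h2 h3 h4 clsM. Qed.
Lemma CenC c : Cen (cls (QConst c)).
Proof. by exists (QConst c). Qed.
Lemma Cen0 : Cen 0. Proof. exact: CenC. Qed.
Lemma Cen1 : Cen 1. Proof. exact: CenC. Qed.
Lemma CenN z : Cen z -> Cen (- z).
Proof. move=> h; rewrite -mulN1r; apply: CenM h; rewrite -cls1 -clsN1; exists (QMul (QConst (-1)) (QConst 1)); by []. Qed.
Lemma Cen_gen t i j : two_var t -> Cen (cls (gen t i j)).
Proof. move=> h; case/andP: (gen_ok t i j) => h1 h2; exists (gen t i j); split => //; exact: (implyP h2). Qed.
Lemma Cen_tr t : two_var t -> Cen (cls (qtr t)).
Proof. by move=> h; rewrite /qtr clsD; apply: CenD; apply: Cen_gen. Qed.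


Lemma CH (a b : qt) :
  cls a * cls b + cls b * cls a - cls (qtr a) * cls b - cls (qtr b) * cls a
  + cls (qtr a) * cls (qtr b) - cls (qtr (QMul a b)) = 0.
Proof.
pose H k := if k == 0%N then a else b.
have e : qsubst H (Q2 F) =
  QSub (QAdd (QSub (QSub (QAdd (QMul a b) (QMul b a)) (QMul (qtr a) b))
                   (QMul (qtr b) a)) (QMul (qtr a) (qtr b))) (qtr (QMul a b)) := erefl.
have := I_cls0 (TI_subst H (TI_gen F)); rewrite e.
by rewrite !(clsB, clsD, clsM).
Qed.

Hypothesis charF0 : [pchar F] =i pred0.

Definition half : Q := cls (QConst (2%:R^-1)).
Lemma half2 : half + half = 1.
Proof.
rewrite /half -clsD -cls1; apply/cls_eq/qeq_Rel; rewrite -qeq_constD.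
have h2 : (2%:R : F) != 0 by rewrite (pcharf0P _).1.
have e : (2%:R^-1 + 2%:R^-1 : F) = 1 by field.
by rewrite e; reflexivity.
Qed.

Lemma zmod_id1 (V : zmodType) (w p a b : V) :
  w = ((((w - p) - p) + a) - b) + b - a + p + p.
Proof. by rewrite subrK addrK !subrK. Qed.

Lemma zmod_id2 (V : zmodType) (w q p1 p2 a b : V) :
  w = (((((q + w) - p1) - p2) + a) - b) + b - a + p2 + p1 - q.
Proof. by rewrite subrK addrK !subrK [q + w]addrC addrK. Qed.

Definition lin (X Y a b c d : Q) := a + b * X + c * Y + d * (X * Y).

Section Span.
Variables (X Y : qt).
Hypotheses (hX : two_var X) (hY : two_var Y).
Local Notation x := (cls X).
Local Notation y := (cls Y).

Definition InS (s : Q) := exists a b c d, [/\ Cen a, Cen b, Cen c, Cen d & s = lin x y a b c d].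

Lemma InS_add s t : InS s -> InS t -> InS (s + t).
Proof.
case=> [a [b [c [d [ha hb hc hd ->]]]]] [a' [b' [c' [d' [ha' hb' hc' hd' ->]]]]].
exists (a + a'), (b + b'), (c + c'), (d + d'); split; try exact: CenD.
rewrite /lin !mulrDl.
by rewrite (addrACA (_ + _ + _)) (addrACA (a + b * cls X)) (addrACA a).
Qed.

Lemma InS_cmul z s : Cen z -> InS s -> InS (z * s).
Proof.
move=> hz [a [b [c [d [ha hb hc hd ->]]]]].
exists (z * a), (z * b), (z * c), (z * d); split; try exact: CenM.
by rewrite /lin !mulrDr !mulrA.
Qed.

Lemma InS_lin a b c d : Cen a -> Cen b -> Cen c -> Cen d -> InS (lin x y a b c d).
Proof. by move=> *; exists a, b, c, d. Qed.

Lemma InS_1 : InS 1.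
Proof.
have -> : 1 = lin x y 1 0 0 0 by rewrite /lin !mul0r !addr0.
apply: InS_lin; [exact: Cen1|exact: Cen0|exact: Cen0|exact: Cen0].
Qed.
Lemma InS_x : InS x.
Proof.
have -> : x = lin x y 0 1 0 0 by rewrite /lin !mul0r mul1r add0r !addr0.
apply: InS_lin; [exact: Cen0|exact: Cen1|exact: Cen0|exact: Cen0].
Qed.
Lemma InS_y : InS y.
Proof.
have -> : y = lin x y 0 0 1 0 by rewrite /lin !mul0r mul1r add0r addr0 add0r.
apply: InS_lin; [exact: Cen0|exact: Cen0|exact: Cen1|exact: Cen0].
Qed.
Lemma InS_xy : InS (x * y).
Proof.
have -> : x * y = lin x y 0 0 0 1 by rewrite /lin !mul0r mul1r !add0r.
apply: InS_lin; [exact: Cen0|exact: Cen0|exact: Cen0|exact: Cen1].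
Qed.
Lemma InS_cen z : Cen z -> InS z.
Proof. by move=> hz; rewrite -[z]mulr1; apply: InS_cmul hz InS_1. Qed.
Lemma InS_N s : InS s -> InS (- s).
Proof. by move=> h; rewrite -mulN1r; apply: InS_cmul h; apply/CenN/Cen1. Qed.
Lemma InS_B s t : InS s -> InS t -> InS (s - t).
Proof. by move=> h1 h2; apply: InS_add h1 (InS_N h2). Qed.

Lemma sq_form (Z : qt) : two_var Z ->
  exists al be, [/\ Cen al, Cen be & cls Z * cls Z = al + be * cls Z].
Proof.
move=> hZ; have h := CH Z Z.
have hZZ : two_var (QMul Z Z) by rewrite /= hZ.
set z := cls Z in h *; set tz := cls (qtr Z) in h *; set T := cls (qtr (QMul Z Z)) in h *.
have e : z * z + z * z = (T - tz * tz) + (tz + tz) * z.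
  rewrite {1}(zmod_id1 (z * z + z * z) (tz * z) (tz * tz) T) h add0r mulrDl addrA.
  by [].
have e2 : z * z = half * (z * z + z * z) by rewrite mulrDr -mulrDl half2 mul1r.
exists (half * (T - tz * tz)), (half * (tz + tz)); split.
- apply: CenM; first exact: CenC.
  by apply: CenD; [exact: Cen_tr hZZ|apply/CenN/CenM; exact: Cen_tr hZ].
- by apply: CenM; [exact: CenC|apply: CenD; exact: Cen_tr hZ].
- by rewrite e2 e mulrDr mulrA.
Qed.

Lemma yx_form : exists al be ga,
  [/\ Cen al, Cen be, Cen ga & y * x = al + be * x + ga * y - x * y].
Proof.
have h := CH X Y.
have hXY : two_var (QMul X Y) by rewrite /= hX hY.
set tx := cls (qtr X) in h *; set ty := cls (qtr Y) in h *; set T := cls (qtr (QMul X Y)) in h *.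
exists (T - tx * ty), ty, tx; split.
- by apply: CenD; [exact: Cen_tr hXY|apply/CenN/CenM; [exact: Cen_tr hX|exact: Cen_tr hY]].
- exact: Cen_tr hY.
- exact: Cen_tr hX.
- rewrite {1}(zmod_id2 (y * x) (x * y) (tx * y) (ty * x) (tx * ty) T) h add0r.
  by [].
Qed.

Lemma InS_mulx s : InS s -> InS (x * s).
Proof.
case=> [a [b [c [d [ha hb hc hd ->]]]]].
have [al [be [hal hbe exx]]] := sq_form hX.
rewrite /lin !mulrDr.
apply: InS_add; first apply: InS_add; first apply: InS_add.
- by rewrite -(Cen_comm _ ha); exact: (InS_cmul ha InS_x).
- rewrite (CenA _ _ hb) exx; apply: (InS_cmul hb); apply: InS_add; first exact: InS_cen.
  exact: (InS_cmul hbe InS_x).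
- by rewrite (CenA _ _ hc); exact: (InS_cmul hc InS_xy).
- rewrite (CenA _ _ hd) [cls X * (cls X * _)]mulrA exx mulrDl -mulrA; apply: (InS_cmul hd).
  by apply: InS_add; [exact: (InS_cmul hal InS_y)|exact: (InS_cmul hbe InS_xy)].
Qed.

Lemma InS_muly s : InS s -> InS (y * s).
Proof.
case=> [a [b [c [d [ha hb hc hd ->]]]]].
have [al [be [hal hbe eyy]]] := sq_form hY.
have [al' [be' [ga [hal' hbe' hga eyx]]]] := yx_form.
have Syy : InS (y * y).
  by rewrite eyy; apply: InS_add; [exact: InS_cen|exact: (InS_cmul hbe InS_y)].
have Syx : InS (y * x).
  rewrite eyx; apply: InS_B; last exact: InS_xy.
  apply: InS_add; first apply: InS_add.
  - exact: InS_cen.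
  - exact: (InS_cmul hbe' InS_x).
  - exact: (InS_cmul hga InS_y).
rewrite /lin !mulrDr.
apply: InS_add; first apply: InS_add; first apply: InS_add.
- by rewrite -(Cen_comm _ ha); exact: (InS_cmul ha InS_y).
- by rewrite (CenA _ _ hb); exact: (InS_cmul hb Syx).
- by rewrite (CenA _ _ hc); exact: (InS_cmul hc Syy).
- rewrite (CenA _ _ hd) [cls Y * (cls X * _)]mulrA eyx; apply: (InS_cmul hd).
  rewrite mulrBl !mulrDl -!mulrA.
  apply: InS_B.
  + apply: InS_add; first apply: InS_add.
    * exact: (InS_cmul hal' InS_y).
    * exact: (InS_cmul hbe' InS_xy).
    * exact: (InS_cmul hga Syy).
  + rewrite eyy mulrDr (CenA _ _ hbe) -(Cen_comm _ hal).
    by apply: InS_add; [exact: (InS_cmul hal InS_x)|exact: (InS_cmul hbe InS_xy)].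
Qed.

End Span.


Local Notation S0 := (@InS (QVar 0) (QVar 1)).

Lemma InS_term (t : qt) : two_var t -> forall s, S0 s -> S0 (cls t * s).
Proof.
have h0 : two_var (QVar 0 : qt) by []. have h1 : two_var (QVar 1 : qt) by [].
elim: t => [k|k i j|c|p IHp q IHq|p IHp q IHq] /= ht s hs.
- case: k ht => [|[|//]] _.
    exact: (InS_mulx h0 hs).
  by apply: InS_muly.
- apply: (InS_cmul _ hs); exists (QEnt k i j); split => //.
- exact: (InS_cmul (CenC c) hs).
- case/andP: ht => hp hq; rewrite clsD mulrDl; apply: InS_add; [exact: IHp|exact: IHq].
- case/andP: ht => hp hq; rewrite clsM -mulrA; apply: IHp => //; exact: IHq.
Qed.

Lemma InS_P (t : qt) : two_var t -> S0 (cls t).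
Proof. by move=> ht; rewrite -[cls t]mulr1; apply: InS_term ht _ (InS_1 _ _). Qed.

Fixpoint PR (n : nat) : idomainType :=
  match n with 0 => F | n'.+1 => {poly PR n'} end.

Fixpoint ev (n : nat) (v : nat -> F) : {rmorphism PR n -> F} :=
  match n return {rmorphism PR n -> F} with
  | 0 => idfun
  | n'.+1 => horner_morph (fun x => mulrC (v n') (ev n' v x) : GRing.comm (v n') (ev n' v x))
  end.

Fixpoint gvar (n k : nat) : PR n :=
  match n return PR n with
  | 0 => 0
  | n'.+1 => if k == n' then 'X else (gvar n' k)%:P
  end.

Fixpoint cst (n : nat) (c : F) : PR n :=
  match n return PR n with
  | 0 => c
  | n'.+1 => (cst n' c)%:P
  end.

Lemma ev_gvar n v k : (k < n)%N -> ev n v (gvar n k) = v k.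
Proof.
elim: n => [//|n IH] hk /=.
rewrite /horner_morph; case: eqP => [->|ne].
  by rewrite map_polyX hornerX.
rewrite map_polyC hornerC; apply: IH.
by rewrite ltnS leq_eqVlt in hk; case/orP: hk => // /eqP.
Qed.

Lemma ev_cst n v c : ev n v (cst n c) = c.
Proof. by elim: n => //= n IH; rewrite /horner_morph map_polyC hornerC; apply: IH. Qed.

Lemma ev_ext n v w : (forall k, (k < n)%N -> v k = w k) -> forall p, ev n v p = ev n w p.
Proof.
elim: n => [//|n IH] h p /=.
rewrite /horner_morph h //; congr (_.[_]); apply: eq_map_poly => q; apply: IH => k hk.
by apply: h; apply: ltnW.
Qed.

Lemma poly_vanish (q : {poly F}) : (forall t, q.[t] = 0) -> q = 0.
Proof.
move=> h; apply/eqP; apply/negPn/negP => nz.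
set rs := [seq i%:R | i <- iota 0 (size q)] : seq F.
have hr : all (root q) rs by apply/allP => x /mapP [i _ ->]; apply/rootP.
have hu : uniq rs.
  rewrite map_inj_uniq ?iota_uniq // => i j /eqP.
  rewrite -subr_eq0.
  have [lij|lji] := leqP i j.
    rewrite -opprB -natrB // oppr_eq0 (pcharf0P _).1 // subn_eq0 => hji.
    by apply/eqP; rewrite eqn_leq lij hji.
  by rewrite -natrB ?(ltnW lji) // (pcharf0P _).1 // subn_eq0 leqNgt lji.
by have := max_poly_roots nz hr hu; rewrite size_map size_iota ltnn.
Qed.

Lemma vanish n (p : PR n) : (forall v, ev n v p = 0) -> p = 0.
Proof.
elim: n p => [|n IH] p h; first exact: (h (fun _ => 0)).
apply/polyP => k; rewrite coef0; apply: IH => v.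
pose w t := fun m => if m == n then t else v m.
have hq : map_poly (ev n v) p = 0.
  apply: poly_vanish => t.
  have e : map_poly (ev n (w t)) p = map_poly (ev n v) p.
    by apply: eq_map_poly => q; apply: ev_ext => m hm; rewrite /w (ltn_eqF hm).
  by have := h (w t); rewrite /= /horner_morph e /w eqxx.
by have := congr1 (fun r : {poly F} => r`_k) hq; rewrite coef_map coef0.
Qed.


Definition cQ (c : F) : Q := cls (QConst c).
Lemma cQ_add : GRing.zmod_morphism cQ.
Proof.
move=> a b; rewrite /cQ -clsB; apply/cls_eq/qeq_Rel; rewrite /QSub.
rewrite -qeq_constM mulN1r qeq_constD; reflexivity.
Qed.
Lemma cQ_mul : GRing.monoid_morphism cQ.
Proof.
split => [//|a b]; rewrite /cQ -clsM; apply/cls_eq/qeq_Rel; exact: qeq_constM.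
Qed.
HB.instance Definition _ := GRing.isZmodMorphism.Build F Q cQ cQ_add.
HB.instance Definition _ := GRing.isMonoidMorphism.Build F Q cQ cQ_mul.

Definition ent (m : nat) : Q :=
  cls (QEnt (m %/ 4) (inord ((m %/ 2) %% 2)) (inord (m %% 2))).

Fixpoint Phi (n : nat) : {rmorphism PR n -> Q} :=
  match n return {rmorphism PR n -> Q} with
  | 0 => cQ
  | n'.+1 => horner_morph (fun x => cent_comm (c := QEnt (n' %/ 4) (inord ((n' %/ 2) %% 2)) (inord (n' %% 2))) isT (Phi n' x))
  end.

Lemma Phi_gvar n k : (k < n)%N -> Phi n (gvar n k) = ent k.
Proof.
elim: n => [//|n IH] hk /=.
rewrite /horner_morph; case: eqP => [->|ne].
  by rewrite map_polyX hornerX.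
rewrite map_polyC hornerC; apply: IH.
by rewrite ltnS leq_eqVlt in hk; case/orP: hk => // /eqP.
Qed.

Lemma Phi_cst n c : Phi n (cst n c) = cls (QConst c).
Proof. by elim: n => //= n IH; rewrite /horner_morph map_polyC hornerC; apply: IH. Qed.


Fixpoint pol (t : qt) : PR 8 :=
  match t with
  | QVar _ => 0
  | QEnt k i j => gvar 8 (4 * k + 2 * i + j)
  | QConst c => cst 8 c
  | QAdd p q => pol p + pol q
  | QMul p q => pol p * pol q
  end.

Lemma cls_pol (t : qt) : cent t -> two_var t -> cls t = Phi 8 (pol t).
Proof.
elim: t => [//|k i j|c|p IHp q IHq|p IHp q IHq] hc ht.
- have {}ht : (k < 2)%N := ht.
  have hb : (4 * k + 2 * i + j < 8)%N.
    case: k ht {hc} => [|[|//]] _; case: (ord2P i) => ->; case: (ord2P j) => -> //.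
  symmetry; apply: etrans (Phi_gvar hb) _; symmetry.
  rewrite /ent; clear hb; case: k ht {hc} => [|[|//]] _; case: (ord2P i) => ->; case: (ord2P j) => ->;
    by congr (cls (QEnt _ _ _)); apply: val_inj; rewrite /= ?inordK.
- exact: (esym (Phi_cst 8 c)).
- by case/andP: hc => ? ?; case/andP: ht => ? ?; rewrite clsD rmorphD IHp // IHq.
- by case/andP: hc => ? ?; case/andP: ht => ? ?; rewrite clsM rmorphM IHp // IHq.
Qed.

Definition Am (v : nat -> F) : 'M[F]_2 := \matrix_(i, j) v (Nat.add (Nat.mul 2 i) j).
Definition Bm (v : nat -> F) : 'M[F]_2 := \matrix_(i, j) v (Nat.add (Nat.add 4 (Nat.mul 2 i)) j).

Lemma entries (v : nat -> F) (al be ga de : F) :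
  al%:M + be%:M *m Am v + ga%:M *m Bm v + de%:M *m (Am v *m Bm v) = 0 ->
  [/\ al + be * v 0%N + ga * v 4%N + de * (v 0%N * v 4%N + v 1%N * v 6%N) = 0,
   be * v 1%N + ga * v 5%N + de * (v 0%N * v 5%N + v 1%N * v 7%N) = 0,
   be * v 2%N + ga * v 6%N + de * (v 2%N * v 4%N + v 3%N * v 6%N) = 0 &
   al + be * v 3%N + ga * v 7%N + de * (v 2%N * v 5%N + v 3%N * v 7%N) = 0].
Proof.
move=> /matrixP h.
have o1 : 'I_2 := @Ordinal 2 1 isT.
move: (h ord0 ord0) (h ord0 (@Ordinal 2 1 isT)) (h (@Ordinal 2 1 isT) ord0) (h (@Ordinal 2 1 isT) (@Ordinal 2 1 isT)).
rewrite !mxE !big_ord2 !mxE /= !big_ord2 !mxE /= ?mulr1n ?mulr0n => e11 e12 e21 e22.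
split; [rewrite -e11|rewrite -e12|rewrite -e21|rewrite -e22]; ring.
Qed.

Lemma qeval_pol v (t : qt) : cent t -> two_var t ->
  qeval (env2 (Am v) (Bm v)) t = (ev 8 v (pol t))%:M.
Proof.
elim: t => [//|k i j|c|p IHp q IHq|p IHp q IHq] hc ht.
- have {}ht : (k < 2)%N := ht.
  have hb : (4 * k + 2 * i + j < 8)%N.
    case: k ht {hc} => [|[|//]] _; case: (ord2P i) => ->; case: (ord2P j) => -> //.
  symmetry; apply: etrans (congr1 _ (ev_gvar v hb)) _; symmetry.
  by clear hb; case: k ht {hc} => [|[|//]] _; rewrite /env2 /= mxE.
- by rewrite /= (ev_cst 8 v c).
- have -> : qeval (env2 (Am v) (Bm v)) (QAdd p q) = qeval (env2 (Am v) (Bm v)) p + qeval (env2 (Am v) (Bm v)) q by [].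
  by case/andP: hc => ? ?; case/andP: ht => ? ?; rewrite rmorphD IHp // IHq // raddfD.
- have -> : qeval (env2 (Am v) (Bm v)) (QMul p q) = qeval (env2 (Am v) (Bm v)) p *m qeval (env2 (Am v) (Bm v)) q by [].
  by case/andP: hc => ? ?; case/andP: ht => ? ?; rewrite rmorphM IHp // IHq // scalar_mxM.
Qed.

Lemma cancel8 (P1 P2 : PR 8) : (forall v, ev 8 v P1 * ev 8 v P2 = 0) ->
  (exists v, ev 8 v P1 != 0) -> P2 = 0.
Proof.
move=> h [v0 hv0].
have : P1 * P2 = 0 by apply: vanish => v; rewrite rmorphM h.
move/eqP; rewrite mulf_eq0 => /orP [/eqP e|/eqP //].
by move: hv0; rewrite e rmorph0 eqxx.
Qed.

End Quot.

Section Alg.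
Variable R : comRingType.
Variables al be ga de a b c d e f g h : R.
Hypotheses (h11 : al + be*a + ga*e + de*(a*e+b*g) = 0)
           (h12 : be*b + ga*f + de*(a*f+b*h) = 0)
           (h21 : be*c + ga*g + de*(c*e+d*g) = 0)
           (h22 : al + be*d + ga*h + de*(c*f+d*h) = 0).

Lemma alg1 : b*((c*f-b*g)*(c*f-b*g) + (b*(h-e) - f*(d-a))*(c*e+d*g-a*g-c*h)) * de = 0.
Proof.
have -> : b*((c*f-b*g)*(c*f-b*g) + (b*(h-e) - f*(d-a))*(c*e+d*g-a*g-c*h)) * de =
  (c*f-b*g)*(b*((al + be*d + ga*h + de*(c*f+d*h)) - (al + be*a + ga*e + de*(a*e+b*g)))
             - (d-a)*(be*b + ga*f + de*(a*f+b*h)))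
  + (b*(h-e) - f*(d-a))*(b*(be*c + ga*g + de*(c*e+d*g)) - c*(be*b + ga*f + de*(a*f+b*h))).
  by ring.
by rewrite h11 h12 h21 h22; ring.
Qed.

Lemma alg2 : de = 0 -> (c*f - b*g) * ga = 0.
Proof.
move=> hde.
have -> : (c*f-b*g)*ga = c*(be*b + ga*f + de*(a*f+b*h)) - b*(be*c + ga*g + de*(c*e+d*g))
   + de*(b*(c*e+d*g) - c*(a*f+b*h)) by ring.
by rewrite h12 h21 hde; ring.
Qed.

Lemma alg3 : de = 0 -> ga = 0 -> b * be = 0.
Proof.
move=> hde hga.
have -> : b*be = (be*b + ga*f + de*(a*f+b*h)) - ga*f - de*(a*f+b*h) by ring.
by rewrite h12 hde hga; ring.
Qed.

Lemma alg4 : de = 0 -> ga = 0 -> be = 0 -> al = 0.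
Proof.
move=> hde hga hbe.
have -> : al = (al + be*a + ga*e + de*(a*e+b*g)) - be*a - ga*e - de*(a*e+b*g) by ring.
by rewrite h11 hde hga hbe; ring.
Qed.
End Alg.

Section Final.
Variable F : fieldType.
Hypothesis charF0 : [pchar F] =i pred0.
Local Notation qt := (qterm F).

Lemma main_aux (P : qt) : two_var P -> quasi_identity2 P -> inTideal_Q2 P.
Proof.
move=> hP hq.
have [a [b [c [d [ha hb hc hd e]]]]] := InS_P charF0 hP.
case: ha => ca [ca1 ca2 ea]; case: hb => cb [cb1 cb2 eb].
case: hc => cc [cc1 cc2 ec]; case: hd => cd [cd1 cd2 ed].
pose NF := QAdd (QAdd (QAdd ca (QMul cb (QVar 0))) (QMul cc (QVar 1)))
             (QMul cd (QMul (QVar 0) (QVar 1))).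
have eNF : cls P = cls NF by rewrite e /lin /NF ea eb ec ed !clsD !clsM.
have hev : forall v, qeval (env2 (Am v) (Bm v)) NF = 0.
  move=> v; have /cls_eq hr := eNF; have := qeval_I hr (env2 (Am v) (Bm v)).
  rewrite /QSub /= hq add0r mul_scalar_mx scaleN1r => /eqP; by rewrite oppr_eq0 => /eqP.
have E v : (ev 8 v (pol ca))%:M + (ev 8 v (pol cb))%:M *m Am v + (ev 8 v (pol cc))%:M *m Bm v
    + (ev 8 v (pol cd))%:M *m (Am v *m Bm v) = 0.
  have := hev v.
  have -> : qeval (env2 (Am v) (Bm v)) NF =
    qeval (env2 (Am v) (Bm v)) ca + qeval (env2 (Am v) (Bm v)) cb *m Am v
    + qeval (env2 (Am v) (Bm v)) cc *m Bm v + qeval (env2 (Am v) (Bm v)) cd *m (Am v *m Bm v) by [].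
  by rewrite !qeval_pol.
have Es v := entries (E v).
pose xv k := gvar F 8 k.
have evx v k : (k < 8)%N -> ev 8 v (xv k) = v k by move=> hk; apply: ev_gvar.
clearbody xv.
pose vs (k : nat) : F := if (k == 1%N) || (k == 2%N) || (k == 6%N) then 1 else 0.
pose qP := xv 2%N * xv 5%N - xv 1%N * xv 6%N.
pose sP := xv 1%N * (xv 7%N - xv 4%N) - xv 5%N * (xv 3%N - xv 0%N).
pose pP := xv 2%N * xv 4%N + xv 3%N * xv 6%N - xv 0%N * xv 6%N - xv 2%N * xv 7%N.
pose D1 := xv 1%N * (qP * qP + sP * pP).
have evM v (p q : PR F 8) : ev 8 v (p * q) = ev 8 v p * ev 8 v q by apply: rmorphM.
have evB v (p q : PR F 8) : ev 8 v (p - q) = ev 8 v p - ev 8 v q by apply: rmorphB.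
have evD v (p q : PR F 8) : ev 8 v (p + q) = ev 8 v p + ev 8 v q by apply: rmorphD.
have pd : pol cd = 0.
  apply: (cancel8 charF0 (P1 := D1)).
    move=> v; rewrite /D1 /qP /sP /pP.
    rewrite !(evM, evB, evD).
    rewrite !evx //.
    by case: (Es v) => h11 h12 h21 h22; apply: alg1 h11 h12 h21 h22.
  exists vs; rewrite /D1 /qP /sP /pP !(evM, evB, evD) !evx // /vs /=.
  by rewrite !(mul1r, mulr1, mul0r, mulr0, subrr, sub0r, subr0, add0r, addr0, mulrNN) oner_eq0.
have pc : pol cc = 0.
  apply: (cancel8 charF0 (P1 := qP)).
    move=> v; rewrite /qP !(evM, evB, evD) !evx //.
    case: (Es v) => h11 h12 h21 h22; apply: (alg2 h12 h21).
    by rewrite pd rmorph0.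
  exists vs; rewrite /qP !(evM, evB, evD) !evx // /vs /=.
  by rewrite !(mul1r, mulr1, mul0r, mulr0, subrr, sub0r, subr0, add0r, addr0) oppr_eq0 oner_eq0.
have pb : pol cb = 0.
  apply: (cancel8 charF0 (P1 := xv 1%N)).
    move=> v; rewrite !evx //.
    case: (Es v) => h11 h12 h21 h22; apply: (alg3 h12).
      by rewrite pd rmorph0.
    by rewrite pc rmorph0.
  by exists vs; rewrite !evx // /vs /= oner_eq0.
have pa : pol ca = 0.
  apply: (vanish charF0) => v.
  case: (Es v) => h11 h12 h21 h22; apply: (alg4 h11).
  - by rewrite pd rmorph0.
  - by rewrite pc rmorph0.
  - by rewrite pb rmorph0.
have cP : cls P = 0.
  rewrite eNF /NF !clsD !clsM (cls_pol ca1 ca2) (cls_pol cb1 cb2) (cls_pol cc1 cc2) (cls_pol cd1 cd2).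
  by rewrite pa pb pc pd !rmorph0 !mul0r !addr0.
exact: cls0_I.
Qed.
End Final.

Theorem mainTheorem17 (F : fieldType) (charF0 : [pchar F] =i pred0)
  (P : qterm F) :
  two_var P -> quasi_identity2 P -> inTideal_Q2 P.
Proof. exact: main_aux. Qed.
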